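(* Let $d>0$ and let $p\in\mathbb R[x_1,\dots,x_n]$ have degree $d$ and satisfy $p(x)=1$ whenever $\sum_{j=1}^n x_j=1$. Then $p$ has at least $n$ distinct monomials of degree $d$ (with nonzero coefficients). *)

(* Defs.v *)
From mathcomp Require Import all_boot all_order all_algebra.
From mathcomp Require Import reals.
From mathcomp Require Import mpoly.
Set Implicit Arguments. Unset Strict Implicit. Unset Printing Implicit Defensive.
Import Order.TTheory GRing.Theory Num.Theory.
Local Open Scope ring_scope.

Definition top_monomials (R : realType) (n : nat) (p : {mpoly R[n]}) (d : nat)
  : seq 'X_{1..n} :=
  [seq m <- msupp p | mdeg m == d].

(* Main.v *)
Require Import Defs.
From mathcomp Require Import all_boot all_order all_algebra.
From mathcomp Require Import reals.
From mathcomp Require Import mpoly.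
From mathcomp Require Import zify.
Set Implicit Arguments. Unset Strict Implicit. Unset Printing Implicit Defensive.
Import Order.TTheory GRing.Theory Num.Theory.
Local Open Scope ring_scope.

Section Uni.
Variable R : realType.

Lemma poly_const (P : {poly R}) c : (forall t, P.[t] = c) -> P = c%:P.
Proof.
move=> H; apply/eqP; rewrite -subr_eq0; apply/eqP.
apply: (@roots_geq_poly_eq0 _ _ [seq i%:R | i <- iota 0 (size (P - c%:P))]).
- by apply/allP => x _; rewrite /root hornerD hornerN hornerC H subrr.
- rewrite map_inj_uniq ?iota_uniq // => i j /eqP; rewrite eqr_nat => /eqP //.
- by rewrite size_map size_iota.
Qed.

Lemma coefM_top (f g : {poly R}) a b : (size f <= a.+1)%N -> (size g <= b.+1)%N ->
  ((f * g)`_(a + b) = f`_a * g`_b)%R /\ (size (f * g)%R <= (a + b).+1)%N.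
Proof.
move=> sf sg; split; last first.
  apply: leq_trans (size_mul_leq _ _) _; lia.
move/leq_sizeP: sf => hf; move/leq_sizeP: sg => hg.
have ha : (a < (a + b).+1)%N by rewrite ltnS leq_addr.
rewrite coefM (bigD1 (Ordinal ha)) //= addKn big1 ?addr0 // => j /eqP nja.
case: (ltngtP j a) => [lt|gt|eq].
- by rewrite hg ?mulr0 //; lia.
- by rewrite hf ?mul0r //; apply: ltnW.
- by exfalso; apply: nja; apply: val_inj.
Qed.

Lemma coef_prod_top (I : Type) (r : seq I) (F : I -> {poly R}) (k : I -> nat) :
  (forall i, size (F i) <= (k i).+1)%N ->
  (size (\prod_(i <- r) F i)%R <= (\sum_(i <- r) k i).+1)%N /\
  (\prod_(i <- r) F i)`_(\sum_(i <- r) k i) = \prod_(i <- r) (F i)`_(k i).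
Proof.
move=> hF; elim: r => [|i r [IH1 IH2]].
  by rewrite !big_nil size_poly1 coef1.
rewrite !big_cons; have [h1 h2] := coefM_top (hF i) IH1.
by rewrite h1 IH2.
Qed.

Lemma coef_exp_top (f : {poly R}) k : (size f <= 2)%N ->
  (size (f ^+ k)%R <= k.+1)%N /\ (f ^+ k)`_k = f`_1 ^+ k.
Proof.
move=> sf; elim: k => [|k [IH1 IH2]].
  by rewrite !expr0 size_poly1 coef1.
have [h1 h2] := coefM_top sf IH1.
  rewrite exprS; split; first exact: h2.
  by rewrite [in LHS](_ : k.+1 = (1 + k)%N) // h1 IH2 -exprS.
Qed.

End Uni.

Section Multi.
Variable R : realType.
Variable n : nat.
Implicit Types (p : {mpoly R[n]}) (m : 'X_{1..n}).

Definition wd (B : pred 'I_n) m : nat := (\sum_(i < n | B i) m i)%N.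

Definition lineP p (a b : 'I_n -> R) : {poly R} :=
  \sum_(m <- msupp p) p@_m *: \prod_(i < n) ((a i)%:P + b i *: 'X) ^+ m i.

Lemma lineP_horner p a b t : (lineP p a b).[t] = p.@[fun i => a i + t * b i].
Proof.
rewrite mevalE /lineP horner_sum; apply: eq_bigr => m _.
rewrite hornerZ horner_prod; congr (_ * _); apply: eq_bigr => i _.
by rewrite horner_exp hornerD hornerC hornerZ hornerX mulrC.
Qed.

Lemma lineP_coef p (B : pred 'I_n) a b D :
  (forall i, ~~ B i -> b i = 0) ->
  (forall m, m \in msupp p -> (wd B m <= D)%N) ->
  (lineP p a b)`_D = \sum_(m <- msupp p | wd B m == D)
     p@_m * \prod_(i < n) (if B i then b i ^+ m i else a i ^+ m i).
Proof.
move=> hB hD; rewrite /lineP coef_sum [RHS]big_mkcond /= !big_seq; apply: eq_bigr => m hm.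
rewrite coefZ.
pose k i := if B i then m i else 0%N.
have hF : forall i, (size (((a i)%:P + b i *: 'X) ^+ m i)%R <= (k i).+1)%N /\
   (((a i)%:P + b i *: 'X) ^+ m i)`_(k i) = (if B i then b i ^+ m i else a i ^+ m i).
  move=> i; rewrite /k; case: ifP => Bi.
    have s2 : (size ((a i)%:P + b i *: 'X)%R <= 2)%N.
      apply: leq_trans (size_polyD _ _) _; rewrite geq_max.
      rewrite (leq_trans (size_polyC_leq1 _)) //.
      by rewrite (leq_trans (size_scale_leq _ _)) // size_polyX.
    have [h1 h2] := coef_exp_top (m i) s2; split => //.
    by rewrite h2 coefD coefC coefZ coefX /= add0r mulr1.
  rewrite hB ?Bi // scale0r addr0 -polyC_exp; split; first exact: size_polyC_leq1.
  by rewrite coefC.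
have [s1 c1] := coef_prod_top (index_enum 'I_n) (fun i => proj1 (hF i)).
have ek : (\sum_(i <- index_enum 'I_n) k i)%N = wd B m.
  by rewrite /wd [RHS]big_mkcond.
rewrite ek in s1 c1.
case: eqP => [<-|ne].
  by rewrite c1; congr (_ * _); apply: eq_bigr => i _; rewrite (proj2 (hF i)).
have lt : (wd B m < D)%N by rewrite ltn_neqAle (hD _ hm) andbT; apply/eqP.
by move/leq_sizeP: s1 => ->; rewrite ?mulr0.
Qed.


Lemma QC (r : seq 'X_{1..n}) (P : pred 'X_{1..n}) (c : 'X_{1..n} -> R) (g : 'X_{1..n} -> 'X_{1..n}) mu :
  (\sum_(m <- r | P m) c m *: 'X_[g m])@_mu = \sum_(m <- r | P m) c m * (g m == mu)%:R.
Proof.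
by rewrite raddf_sum /=; apply: eq_bigr => m _; rewrite mcoeffZ mcoeffX.
Qed.

Lemma QE (r : seq 'X_{1..n}) (P : pred 'X_{1..n}) (c : 'X_{1..n} -> R) (g : 'X_{1..n} -> 'X_{1..n}) x :
  (\sum_(m <- r | P m) c m *: 'X_[g m]).@[x] =
  \sum_(m <- r | P m) c m * \prod_(i < n) x i ^+ (g m i).
Proof.
by rewrite raddf_sum /=; apply: eq_bigr => m _; rewrite mevalZ mevalX.
Qed.

Lemma sum_pick (r : seq 'X_{1..n}) (P : pred 'X_{1..n}) (F : 'X_{1..n} -> R) m0 :
  uniq r -> m0 \in r -> P m0 ->
  \sum_(m <- r | P m) F m * (m == m0)%:R = F m0.
Proof.
move=> ur hr hP; rewrite (big_rem m0) //= hP eqxx mulr1 big1_seq ?addr0 //.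
move=> m /andP[_ hm]; case: eqP => [e|]; last by rewrite mulr0.
by move: hm; rewrite e mem_rem_uniqF.
Qed.

Lemma sum_ne0 (r : seq 'X_{1..n}) (P : pred 'X_{1..n}) (F : 'X_{1..n} -> R) :
  \sum_(m <- r | P m) F m != 0 -> exists2 m, m \in r & P m && (F m != 0).
Proof.
elim: r => [|x r IH]; first by rewrite big_nil eqxx.
rewrite big_cons; case: ifP => Px h.
  have [Fx|Fx] := eqVneq (F x) 0.
    by move: h; rewrite Fx add0r => /IH [m hm hP]; exists m => //; rewrite inE hm orbT.
  by exists x; rewrite ?inE ?eqxx ?Px ?Fx.
by have [m hm hP] := IH h; exists m => //; rewrite inE hm orbT.
Qed.

Definition zrp (Z : pred 'I_n) m : 'X_{1..n} := [multinom (if Z i then 0 else m i)%N | i < n].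

Lemma ind_sum j (c : R) : \sum_(i < n) (i == j)%:R * c = c.
Proof.
rewrite (bigD1 j) //= eqxx mul1r big1 ?addr0 // => i /negbTE ->; by rewrite mul0r.
Qed.


Lemma ID_aux k : forall p, (forall m, m \in msupp p -> forall i : 'I_n, (k <= i)%N -> m i = 0%N) ->
  (forall x, p.@[x] = 0) -> p = 0.
Proof.
elim: k => [|k IH] p hz hx.
  have e : forall m, m \in msupp p -> m = 0%MM.
    by move=> m hm; apply/mnmP => i; rewrite mnm0E; exact: hz.
  have hpc : p = (p@_0%MM)%:MP.
    apply/mpolyP => m; rewrite mcoeffC; case: eqP => [->|ne]; first by rewrite mulr1.
    rewrite mulr0; apply: memN_msupp_eq0; apply/negP => /e; exact: ne.
  have c0 : p@_0%MM = 0 by move: (hx (fun _ => 0)); rewrite {1}hpc mevalC.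
  by rewrite hpc c0 mpolyC0.
case: (ltnP k n) => hk; last first.
  apply: IH hx => m hm i ki; exfalso; have := ltn_ord i; lia.
set i0 := Ordinal hk.
have wd1 : forall m, wd (pred1 i0) m = m i0 by move=> m; rewrite /wd big_pred1_eq.
have claim : forall D, (forall m, m \in msupp p -> (m i0 <= D)%N) ->
    forall m, m \in msupp p -> (m i0 < D)%N.
  move=> D hD m hm; rewrite ltn_neqAle hD // andbT; apply/negP => /eqP hmD.
  pose b := fun i : 'I_n => (i == i0)%:R : R.
  have hB : forall i, ~~ pred1 i0 i -> b i = 0 by move=> i /negbTE; rewrite /b /= => ->.
  have hD' : forall m, m \in msupp p -> (wd (pred1 i0) m <= D)%N.
    by move=> m' hm'; rewrite wd1 hD.
  pose Q := \sum_(m' <- msupp p | wd (pred1 i0) m' == D) p@_m' *: 'X_[zrp (pred1 i0) m']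
     : {mpoly R[n]}.
  have Q0 : Q = 0.
    apply: IH.
      move=> m'' hm'' i ki.
      rewrite mcoeff_msupp QC in hm''.
      have [m' hm' /andP[_ ne]] := sum_ne0 hm''.
      move: ne; case: (eqVneq (zrp (pred1 i0) m') m'') => [<-|_]; last by rewrite mulr0 eqxx.
      move=> _; rewrite /zrp mnmE /=; case: eqP => // ne.
      apply: hz hm' _ _.
      have : val i != k by apply/eqP => e; apply: ne; apply: val_inj.
      by move=> h; rewrite ltn_neqAle ki andbT eq_sym.
    move=> x.
    have := lineP_coef x hB hD'.
    have -> : lineP p x b = 0%:P.
      by apply: poly_const => t; rewrite lineP_horner; exact: hx.
    rewrite coefC if_same => E.
    rewrite QE [RHS]E; apply: eq_bigr => m' _; congr (_ * _); apply: eq_bigr => i _.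
    rewrite /zrp mnmE /= /b; case: eqP => [->|] //.
    by rewrite expr1n expr0.
  have := congr1 (mcoeff (zrp (pred1 i0) m)) Q0.
  rewrite mcoeff0 QC.
  rewrite (eq_bigr (fun m' => p@_m' * (m' == m)%:R)); last first.
    move=> m' /eqP hw; congr (_ * _); congr (_%:R); congr (nat_of_bool _).
    case: (eqVneq m' m) => [->|ne]; first by rewrite eqxx.
    apply/negbTE; apply: contra_neq ne => e; apply/mnmP => i.
    have := congr1 (fun mm : 'X_{1..n} => mm i) e; rewrite /zrp !mnmE /=.
    case: eqP => [->|] // _; first by rewrite -wd1 hw hmD.
  rewrite sum_pick ?msupp_uniq //; last by rewrite wd1 hmD.
  by move=> e; move: hm; rewrite mcoeff_msupp e eqxx.
have desc : forall e m, m \in msupp p -> (m i0 + e <= msize p)%N.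
  elim=> [|e IHe] m hm.
    rewrite addn0; apply: ltnW; apply: leq_ltn_trans (msize_mdeg_lt hm).
    by rewrite mdegE (bigD1 i0) //=; exact: leq_addr.
  have h : (m i0 < msize p - e)%N.
    by apply: claim hm => m' hm'; have := IHe m' hm'; lia.
  have := IHe m hm; lia.
apply/mpolyP => m; rewrite mcoeff0; apply: memN_msupp_eq0; apply/negP => hm.
have := desc (msize p).+1 m hm; lia.
Qed.

Lemma ID p : (forall x, p.@[x] = 0) -> p = 0.
Proof. by apply: (@ID_aux n) => m _ i; have := ltn_ord i; lia. Qed.

End Multi.

Lemma seq_max (T : eqType) (s : seq T) (f : T -> nat) : s != [::] ->
  exists m, (m \in s) && all (fun m' => f m' <= f m)%N s.
Proof.
elim: s => // x s IH _; case: (eqVneq s [::]) => [->|ne].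
  by exists x; rewrite /= inE eqxx leqnn.
have [m /andP[ms al]] := IH ne.
case: (leqP (f x) (f m)) => h.
  by exists m; rewrite inE ms orbT /= h al.
exists x; rewrite inE eqxx /= leqnn /=; apply/allP => y ys.
by apply: leq_trans (ltnW h); exact: (allP al).
Qed.

Section Main.
Variable R : realType.
Variables n d : nat.
Variable p : {mpoly R[n]}.
Hypothesis hd : (0 < d)%N.
Hypothesis hs : msize p = d.+1.
Hypothesis hp : forall x : 'I_n -> R, \sum_(j < n) x j = 1 -> p.@[x] = 1.

Lemma ind_sum1 (j : 'I_n) : \sum_(i < n) (i == j)%:R = 1 :> R.
Proof. by rewrite (bigD1 j) //= eqxx big1 ?addr0 // => i /negbTE ->. Qed.

Definition pd : {mpoly R[n]} := \sum_(m <- msupp p | mdeg m == d) p@_m *: 'X_[m].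

Lemma pdE x : pd.@[x] = \sum_(m <- msupp p | mdeg m == d) p@_m * \prod_(i < n) x i ^+ m i.
Proof. exact: QE. Qed.

Lemma pdC m : pd@_m = \sum_(m' <- msupp p | mdeg m' == d) p@_m' * (m' == m)%:R.
Proof. exact: QC. Qed.

Lemma pdC' m : m \in msupp p -> mdeg m == d -> pd@_m = p@_m.
Proof. by move=> hm hd'; rewrite pdC sum_pick ?msupp_uniq. Qed.

Lemma pd_supp m : m \in msupp pd -> (m \in msupp p) && (mdeg m == d).
Proof.
rewrite mcoeff_msupp pdC => /sum_ne0 [m' hm' /andP[hd' ne]].
by move: ne; case: (eqVneq m' m) => [<-|]; rewrite ?mulr0 ?eqxx // hm' hd'.
Qed.

Lemma factA (j : 'I_n) v : \sum_(i < n) v i = 0 -> pd.@[v] = 0.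
Proof.
move=> hv.
have hB : forall i, ~~ predT i -> v i = 0 by [].
have wdT : forall m : 'X_{1..n}, wd predT m = mdeg m by move=> m; rewrite /wd mdegE.
have hD : forall m, m \in msupp p -> (wd predT m <= d)%N.
  by move=> m hm; rewrite wdT -ltnS -hs; exact: msize_mdeg_lt.
pose a := fun i : 'I_n => (i == j)%:R : R.
have := lineP_coef a hB hD.
have -> : lineP p a v = 1%:P.
  apply: poly_const => t; rewrite lineP_horner; apply: hp.
  by rewrite big_split /= -mulr_sumr hv mulr0 addr0 ind_sum1.
rewrite coefC (gtn_eqF hd) => E.
rewrite pdE [RHS]E; apply: eq_bigl => m; by rewrite wdT.
Qed.


Lemma KL (j k : 'I_n) mu : j != k -> mu \in msupp p -> mdeg mu == d ->
  (forall m, m \in msupp p -> mdeg m == d -> (m j <= mu j)%N) ->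
  (forall m, m \in msupp p -> mdeg m == d -> (m k <= mu k)%N) -> False.
Proof.
move=> jk hmu dmu mj mk.
pose B := [pred i : 'I_n | (i == j) || (i == k)].
pose b := fun i : 'I_n => (i == j)%:R - (i == k)%:R : R.
pose D := (mu j + mu k)%N.
have wdB : forall m : 'X_{1..n}, wd B m = (m j + m k)%N.
  move=> m; rewrite /wd (bigD1 j) /= ?eqxx // (bigD1 k) /=; last first.
    by rewrite eqxx orbT eq_sym jk.
  rewrite big1 ?addn0 // => i /andP[/andP[/orP[] -> ]]; rewrite ?eqxx //.
have hB : forall i, ~~ B i -> b i = 0.
  by move=> i; rewrite /b /= negb_or => /andP[/negbTE -> /negbTE ->]; rewrite subrr.
have hD : forall m, m \in msupp pd -> (wd B m <= D)%N.
  move=> m /pd_supp /andP[hm dm]; rewrite wdB; apply: leq_add; [exact: mj | exact: mk].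
pose Q := \sum_(m <- msupp pd | wd B m == D) pd@_m *: 'X_[zrp B m] : {mpoly R[n]}.
pose ka := \prod_(i < n) (if B i then b i ^+ mu i else 1).
have ka0 : ka != 0.
  apply/prodf_neq0 => i _; case: ifP => Bi; last exact: oner_neq0.
  apply: expf_neq0; rewrite /b; case/orP: Bi => /eqP ->.
    by rewrite eqxx (negbTE jk) subr0 oner_neq0.
  by rewrite eqxx (eq_sym k j) (negbTE jk) sub0r oppr_eq0 oner_neq0.
have eqm : forall m, m \in msupp pd -> wd B m == D -> m j = mu j /\ m k = mu k.
  move=> m /pd_supp /andP[hm dm]; rewrite wdB => /eqP e.
  have := mj m hm dm; have := mk m hm dm; rewrite /D in e; lia.
have Q0 : Q = 0.
  apply: ID => w.
  pose W := \sum_(i < n) w i.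
  pose a := fun i : 'I_n => w i - (i == j)%:R * W.
  have := lineP_coef a hB hD.
  have -> : lineP pd a b = 0%:P.
    apply: poly_const => t; rewrite lineP_horner; apply: (factA j).
    by rewrite big_split /= -mulr_sumr !sumrB ind_sum !ind_sum1 subrr add0r subrr mulr0.
  rewrite coefC if_same => E.
  have : ka * Q.@[w] = 0.
    rewrite /Q QE mulr_sumr [RHS]E big_seq_cond [RHS]big_seq_cond; apply: eq_bigr => m /andP[hm hw].
    rewrite mulrCA; congr (_ * _).
    have [ej ek] := eqm m hm hw.
    rewrite /ka -big_split /=; apply: eq_bigr => i _; rewrite /zrp mnmE /=.
    case: ifP => Bi.
      by case/orP: Bi => /eqP ->; rewrite ?ej ?ek expr0 mulr1.
    rewrite /a; have -> : (i == j) = false by move: Bi; rewrite /B /=; case: (i == j).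
    by rewrite mul0r subr0 mul1r.
  by move/eqP; rewrite mulf_eq0 (negbTE ka0) /= => /eqP.
have := congr1 (mcoeff (zrp B mu)) Q0.
rewrite mcoeff0 QC big_seq_cond.
rewrite (eq_bigr (fun m => pd@_m * (m == mu)%:R)); last first.
  move=> m /andP[hm hw]; congr (_ * _); congr (_%:R); congr (nat_of_bool _).
  have [ej ek] := eqm m hm hw.
  case: (eqVneq m mu) => [->|ne]; first by rewrite eqxx.
  apply/negbTE; apply: contra_neq ne => e; apply/mnmP => i.
  have := congr1 (fun mm : 'X_{1..n} => mm i) e; rewrite /zrp !mnmE /=.
  by case: ifP => // Bi _; case/orP: Bi => /eqP ->.
have hmu' : mu \in msupp pd.
  by rewrite mcoeff_msupp pdC' // -mcoeff_msupp.
rewrite -big_seq_cond sum_pick ?msupp_uniq //; last by rewrite wdB.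
by move=> e; move: hmu'; rewrite mcoeff_msupp e eqxx.
Qed.

Lemma main_count : (n <= size (top_monomials p d))%N.
Proof.
set S := top_monomials p d.
have memS : forall m, (m \in S) = (mdeg m == d) && (m \in msupp p).
  by move=> m; rewrite /S /top_monomials mem_filter.
have p0 : p != 0 by apply/eqP => e; move: hs; rewrite e msize0.
have hl : mlead p \in S.
  rewrite memS mlead_supp // andbT; apply/eqP.
  by have := mlead_deg p0; rewrite hs; case.
have Sne : S != [::] by apply/eqP => e; move: hl; rewrite e.
have ex : forall j : 'I_n, exists m, (m \in S) && all (fun m' : 'X_{1..n} => m' j <= m j)%N S.
  by move=> j; exact: seq_max.
pose mu j := xchoose (ex j).
have muP : forall j, (mu j \in S) && all (fun m' : 'X_{1..n} => m' j <= mu j j)%N S.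
  by move=> j; exact: (xchooseP (ex j)).
have inj : injective mu.
  move=> j k e; apply/eqP; apply/negPn/negP => jk.
  have /andP[hj aj] := muP j; have /andP[hk ak] := muP k.
  move: (hj); rewrite memS => /andP[dmu hmu].
  apply: (KL jk hmu dmu).
    by move=> m hm dm; apply: (allP aj); rewrite memS dm.
  by rewrite e => m hm dm; apply: (allP ak); rewrite memS dm.
apply: (@leq_trans (size (map mu (enum 'I_n)))); first by rewrite size_map size_enum_ord.
apply: uniq_leq_size; first by rewrite map_inj_uniq ?enum_uniq.
by move=> x /mapP [j _ ->]; have /andP[] := muP j.
Qed.

End Main.

Theorem corollary1 (R : realType) (n d : nat) (p : {mpoly R[n]}) :
  (0 < d)%N ->
  msize p = d.+1 ->
  (forall x : 'I_n -> R, \sum_(j < n) x j = 1 -> p.@[x] = 1) ->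
  (n <= size (top_monomials p d))%N.
Proof. exact: main_count. Qed.
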